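(* Let $G$ be a group of homeomorphisms of a topological space $X$ acting effectively, such that the topology of pointwise convergence $\tau_p$ is an admissible group topology on $G$. If $(G,\tau_\partial)$ is Roelcke precompact, then $(G,\tau_p)$ is Roelcke precompact. If $(G,\tau_p)$ is not Roelcke precompact, then $G$ is not Roelcke precompact in any admissible group topology.
   Context: Admissible group topology: $G$ is a topological group and the action $G\times X\to X$ is continuous. $\tau_p$: subbase $\{f\in G\mid f(x)\in O\}$, $x\in X$, $O$ open. $\tau_\partial$ (permutation topology): group topology whose identity neighbourhood subbase is formed by point stabilizers $\mathrm{St}_x=\{g\in G\mid g(x)=x\}$. Roelcke precompact: the Roelcke uniformity (greatest lower bound of left and right uniformities) is totally bounded. *)

(* Defs.v *)
From HB Require Import structures.
From mathcomp Require Import all_boot all_order.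
From mathcomp Require Import boolp classical_sets cardinality topology.

Set Implicit Arguments.
Unset Strict Implicit.
Unset Printing Implicit Defensive.

Local Open Scope classical_set_scope.

Record group := Group {
  gcarrier :> Type;
  gmul : gcarrier -> gcarrier -> gcarrier;
  ginv : gcarrier -> gcarrier;
  gone : gcarrier;
  gmulA : forall a b c, gmul a (gmul b c) = gmul (gmul a b) c;
  gmul1g : forall a, gmul gone a = a;
  gmulg1 : forall a, gmul a gone = a;
  gmulVg : forall a, gmul (ginv a) a = gone;
  gmulgV : forall a, gmul a (ginv a) = gone }.

Section Defs.
Variable G : group.
Local Notation "a * b" := (gmul a b).
Local Notation "a ^-1" := (ginv a).
Local Notation "1" := (gone G).

Definition is_topology (T : set (set G)) : Prop :=
  T setT /\
  (forall A B, T A -> T B -> T (A `&` B)) /\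
  (forall (I : Type) (F : I -> set G), (forall i, T (F i)) -> T (\bigcup_i F i)).

Definition generated_topology (S : set (set G)) : set (set G) :=
  fun A => forall T, is_topology T -> S `<=` T -> T A.

Definition is_group_topology (T : set (set G)) : Prop :=
  is_topology T /\
  (forall g h W, T W -> W (g * h) ->
     exists U V, [/\ T U, U g, T V, V h &
       forall u v, U u -> V v -> W (u * v)]) /\
  (forall g W, T W -> W (g^-1) ->
     exists U, [/\ T U, U g & forall u, U u -> W (u^-1)]).

Section Action.
Variable X : topologicalType.
Variable act : G -> X -> X.

Definition homeo_action : Prop :=
  (forall x, act 1 x = x) /\
  (forall g h x, act (g * h) x = act g (act h x)) /\
  (forall g, continuous (act g)).

Definition effective : Prop :=
  forall g h, (forall x, act g x = act h x) -> g = h.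

Definition admissible (T : set (set G)) : Prop :=
  is_group_topology T /\
  (forall g x O, open O -> O (act g x) ->
     exists U V, [/\ T U, U g, open V, V x &
       forall h y, U h -> V y -> O (act h y)]).

Definition tau_p : set (set G) :=
  generated_topology
    (fun A => exists x O, open O /\ A = [set f | O (act f x)]).

(* Permutation topology tau_partial: identity neighbourhood subbase formed
   by the point stabilizers St_x; a set U is open iff every g in U has a
   neighbourhood g (St_x1 /\ ... /\ St_xn) contained in U. *)
Definition tau_partial : set (set G) :=
  fun U => forall g, U g -> exists F : set X, finite_set F /\
    forall h, (forall x, F x -> act h x = x) -> U (g * h).
End Action.

Definition compose_rel (D E : set (G * G)) : set (G * G) :=
  [set p | exists z, D (p.1, z) /\ E (z, p.2)].

Definition is_uniformity (Uf : set (set (G * G))) : Prop :=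
  Uf setT /\
  (forall D E, Uf D -> D `<=` E -> Uf E) /\
  (forall D E, Uf D -> Uf E -> Uf (D `&` E)) /\
  (forall E, Uf E -> forall g, E (g, g)) /\
  (forall E, Uf E -> Uf [set p | E (p.2, p.1)]) /\
  (forall E, Uf E -> exists D, Uf D /\ compose_rel D D `<=` E).

Definition left_uniformity (T : set (set G)) : set (set (G * G)) :=
  fun E => exists V, [/\ T V, V 1 & forall g h, V (g^-1 * h) -> E (g, h)].

Definition right_uniformity (T : set (set G)) : set (set (G * G)) :=
  fun E => exists V, [/\ T V, V 1 & forall g h, V (h * g^-1) -> E (g, h)].

(* Roelcke uniformity: the greatest lower bound of the left and right
   uniformities, i.e. the union of all uniformities coarser than both
   (this family is directed, so its union is the greatest lower bound). *)
Definition roelcke_uniformity (T : set (set G)) : set (set (G * G)) :=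
  fun E => exists Uf, [/\ is_uniformity Uf, Uf `<=` left_uniformity T,
                          Uf `<=` right_uniformity T & Uf E].

Definition totally_bounded (Uf : set (set (G * G))) : Prop :=
  forall E, Uf E -> exists F : set G, finite_set F /\
    forall g, exists f, F f /\ E (f, g).

Definition roelcke_precompact (T : set (set G)) : Prop :=
  totally_bounded (roelcke_uniformity T).

End Defs.

(* Main.v *)
Require Import Defs.
From mathcomp Require Import all_boot all_order.
From mathcomp Require Import boolp classical_sets cardinality topology.

Local Open Scope classical_set_scope.

Lemma rp_mono (G : group) (T T' : set (set G)) :
  T `<=` T' -> roelcke_precompact T' -> roelcke_precompact T.
Proof.
move=> sub rp E [Uf [hU hl hr hE]]; apply: rp.
exists Uf; split => //.
- move=> D /hl [V [TV V1 HV]]; exists V; split => //; exact: sub.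
- move=> D /hr [V [TV V1 HV]]; exists V; split => //; exact: sub.
Qed.

Lemma gen_sub (G : group) (S T : set (set G)) :
  is_topology T -> S `<=` T -> generated_topology S `<=` T.
Proof. by move=> hT hS A; apply. Qed.

Lemma tau_partial_top (G : group) (X : topologicalType) (act : G -> X -> X) :
  is_topology (tau_partial act).
Proof.
split; [|split].
- move=> g _; exists set0; split => //; exact: finite_set0.
- move=> A B hA hB g [Ag Bg].
  have [F1 [f1 H1]] := hA g Ag.
  have [F2 [f2 H2]] := hB g Bg.
  exists (F1 `|` F2); split; first by rewrite finite_setU.
  move=> h hh; split; [apply: H1|apply: H2] => x Fx; apply: hh; [by left|by right].
- move=> I F hF g [i _ Fig].
  have [F1 [f1 H1]] := hF i g Fig.
  exists F1; split => // h hh; exists i => //; exact: H1.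
Qed.

Theorem corollary1p2 (G : group) (X : topologicalType) (act : G -> X -> X) :
  homeo_action act -> effective act -> admissible act (tau_p act) ->
  (roelcke_precompact (tau_partial act) -> roelcke_precompact (tau_p act)) /\
  (~ roelcke_precompact (tau_p act) ->
     forall T : set (set G), admissible act T -> ~ roelcke_precompact T).
Proof.
move=> [h1 [hM hc]] _ _; split.
- apply: rp_mono; apply: gen_sub; first exact: tau_partial_top.
  move=> A [x [O [oO ->]]] g Og; exists [set x]; split; first exact: finite_set1.
  by move=> h hh /=; rewrite hM hh.
- move=> nrp T [[hT _] hadm] rpT; apply: nrp; apply: rp_mono rpT.
  apply: gen_sub => // A [x [O [oO ->]]].
  pose I := {U : set G | T U /\ U `<=` [set f | O (act f x)]}.
  have -> : [set f | O (act f x)] = \bigcup_(i : I) proj1_sig i.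
    apply/seteqP; split.
    + move=> g Og; have [U [V [TU Ug oV Vx HUV]]] := hadm g x O oO Og.
      have hUs : U `<=` [set f | O (act f x)] by move=> f Uf; exact: HUV.
      by exists (exist _ U (conj TU hUs)).
    + by move=> g [[U [TU sU]] _ /= Ug]; exact: sU.
  case: hT => _ [_ hU]; apply: hU => -[U [TU _]] //.
Qed.
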